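(* Let $d,s,t,\ell$ be nonnegative integers with $s\ge 1$, $d \geq 3t-5$ and $t \geq \max\{4, \ell+3\}$, and let $\theta_{t,\ell}\in\Theta_{t,\ell}$. For any three edges of $W_d(s)$, the number of subgraphs of $W_d(s)$ isomorphic to $\theta_{t,\ell}$ that contain at least two of these three edges and contain exactly one hub vertex of $W_d(s)$ is at most \[ N= \begin{cases} \max\{s(t-2),\, t-1\}, & \text{if } \mathbf{X}(\theta_{t,\ell}) \text{ is symmetric},\\ \max\{2s(t-2),\, 2(t-1)\}, & \text{if } \mathbf{X}(\theta_{t,\ell}) \text{ is asymmetric}. \end{cases} \]
   Context: For $d \ge 3$ and $s \ge 1$, the $s$-hubbed wheel $W_d(s) = \overline{K_s} + C_d$ has vertex set $\{u_1,\dots,u_s\} \cup \{v_1,\dots,v_d\}$, where $v_1v_2\cdots v_dv_1$ is a cycle, the hub vertices $u_1,\dots,u_s$ are pairwise non-adjacent, and every $u_a$ is adjacent to every $v_i$. Edges $u_av_i$ are spokes; edges $v_iv_{i+1}$ (indices mod $d$) are rim edges. For $t\ge 3$ and $0 \le \ell \le t-3$, $\Theta_{t,\ell}$ is the class of graphs $\theta_{t,\ell}$ obtained from a cycle $v_1v_2\cdots v_tv_1$ by adding exactly $\ell$ chords $v_1v_{i_1},\dots,v_1v_{i_\ell}$ with $2<i_1<\cdots<i_\ell<t$. Its vector is $\mathbf{X}(\theta_{t,\ell}) = (2, i_1, \dots, i_\ell, t)$. The graph (or its vector) is symmetric if $\ell = 0$ or $i_j + i_{\ell+1-j} = t+2$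 for every $j \le (\ell+1)/2$, and asymmetric otherwise. *)

(* Defs.v *)
From mathcomp Require Import all_boot.
Set Implicit Arguments. Unset Strict Implicit. Unset Printing Implicit Defensive.

(* Vertices of the s-hubbed wheel W_d(s): inl a = hub u_{a+1}, inr i = rim v_{i+1}. *)
Definition wheel_vertex (s d : nat) : finType := ('I_s + 'I_d)%type.

Definition is_hub (s d : nat) (x : wheel_vertex s d) : bool :=
  if x is inl _ then true else false.

Definition wheel_adj (s d : nat) : rel (wheel_vertex s d) :=
  fun x y =>
    match x, y with
    | inl _, inr _ => true
    | inr _, inl _ => true
    | inr i, inr j => (i.+1 %% d == j) || (j.+1 %% d == i)
    | inl _, inl _ => false
    end.

Definition is_edge (T : finType) (adj : rel T) (e : {set T}) : bool :=
  [exists x, exists y, (x != y) && adj x y && (e == [set x; y])].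

(* theta_{t,l}: vertex k : 'I_t stands for v_{k+1}; chords is the sorted list
   (i_1,...,i_l) of (1-indexed) chord endpoints, chords being v_1 v_{i_j}. *)
Definition theta_adj (t : nat) (chords : seq nat) : rel 'I_t :=
  fun a b =>
    [|| (a.+1 %% t == b), (b.+1 %% t == a),
        (val a == 0) && (b.+1 \in chords) | (val b == 0) && (a.+1 \in chords)].

Definition theta_chords (t l : nat) (chords : seq nat) : Prop :=
  size chords = l /\ sorted ltn chords /\ all (fun i => (2 < i) && (i < t)) chords.

(* Symmetry of X(theta) = (2, i_1, ..., i_l, t): l = 0 or
   i_j + i_{l+1-j} = t + 2 for every 1 <= j <= (l+1)/2 (i_j 1-indexed,
   i_j = nth 0 chords (j-1); below j.+1 ranges over 1..(l+1)/2). *)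
Definition theta_symmetric (t l : nat) (chords : seq nat) : bool :=
  (l == 0) ||
  [forall j : 'I_((l.+1)./2),
     nth 0 chords j + nth 0 chords (l.+1 - j.+1).-1 == t + 2].

Definition is_subgraph (T : finType) (adj : rel T) (U : {set T}) (F : {set {set T}}) : bool :=
  [forall e in F, is_edge adj e && (e \subset U)].

Definition iso_to (T : finType) (t : nat) (tadj : rel 'I_t)
  (U : {set T}) (F : {set {set T}}) : bool :=
  [exists f : {ffun 'I_t -> T},
    [&& injectiveb f, U == f @: [set: 'I_t],
        [forall a, forall b, (a != b) ==> (([set f a; f b] \in F) == tadj a b)] &
        [forall e in F, exists a, exists b, e == [set f a; f b]]]].

(* Main.v *)
Require Import Defs.
From mathcomp Require Import all_boot zify.
Set Implicit Arguments. Unset Strict Implicit.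


Ltac splitall := repeat match goal with H : context [if _ then _ else _] |- _ => revert H end;
  repeat (case: ifP); intros.

Lemma modn_if (x n : nat) : x < n + n -> x %% n = if x < n then x else x - n.
Proof.
move=> h; case: ifP => h1; first by rewrite modn_small.
have h2 : n <= x by rewrite leqNgt h1.
by rewrite -{1}(subnK h2) modnDr modn_small //; lia.
Qed.

Definition Dd (d i a : nat) := (a + d - i) %% d.

Lemma Dif (d i a : nat) : i < d -> a < d ->
  Dd d i a = if i <= a then a - i else a + d - i.
Proof.
move=> hi ha; rewrite /Dd modn_if; last lia.
case: ifP; case: ifP; lia.
Qed.


Lemma Dlt d i a : 0 < d -> Dd d i a < d.
Proof. by move=> h; rewrite /Dd ltn_pmod. Qed.

Lemma Dadd d i p q : i < d -> p < d -> q < d ->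
  Dd d i q = (Dd d i p + Dd d p q) %% d.
Proof.
move=> hi hp hq; rewrite !Dif // modn_if; last by splitall; lia.
splitall; lia.
Qed.

Definition Wset d L a : {set 'I_d} := [set i : 'I_d | Dd d i a <= L].

Lemma card_W d L a (Hd : 0 < d) : a < d -> #|Wset d L a| <= L.+1.
Proof.
move=> ha.
pose f := fun k : 'I_L.+1 => Ordinal (ltn_pmod (a + d - k) Hd).
apply: (@leq_trans #|f @: setT|); last first.
  by rewrite (leq_trans (leq_imset_card _ _)) // cardsT card_ord.
apply: subset_leq_card; apply/subsetP => i; rewrite inE => hi.
have hk : Dd d i a < L.+1 by [].
apply/imsetP; exists (Ordinal hk) => //; apply: val_inj => /=.
have hi' := ltn_ord i.
move: hi hk; rewrite Dif // => hi hk.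
rewrite modn_if; last by splitall; lia.
splitall; lia.
Qed.

Lemma card_ltD (T : finType) (A B : {set T}) x : x \in A -> x \notin B ->
  #|A :&: B| < #|A|.
Proof.
move=> hA hB.
rewrite (cardsD1 x A) hA add1n ltnS; apply: subset_leq_card.
apply/subsetP => y; rewrite !inE => /andP [yA yB]; rewrite yA andbT.
by apply/eqP => e; move: hB; rewrite -e yB.
Qed.

Lemma card_WI d L a b (Hd : 0 < d) : a < d -> b < d -> a != b -> L.*2 < d ->
  #|Wset d L a :&: Wset d L b| <= L.
Proof.
move=> ha hb hab hL.
have hW := @card_W d L a Hd ha.
suff [x hx1 hx2] : exists2 x, x \in Wset d L a & x \notin Wset d L b.
  have := @card_ltD _ _ _ x hx1 hx2; lia.
move/eqP: hab => hab.
case h: (Dd d a b <= L).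
- have hx : (a + d - L) %% d < d by rewrite ltn_pmod.
  exists (Ordinal hx); rewrite !inE /= ?(Dif hx ha) ?(Dif hx hb);
   move: h; rewrite (Dif ha hb) modn_if; try lia; splitall; lia.
- by exists (Ordinal ha); rewrite !inE /= ?h // /Dd addKn modnn.
Qed.

Definition G3 d (A1 A2 A3 : {set 'I_d}) : {set 'I_d} :=
  [set i | 2 <= (i \in A1) + (i \in A2) + (i \in A3)].

Lemma G3C12 d (A1 A2 A3 : {set 'I_d}) : G3 A1 A2 A3 = G3 A2 A1 A3.
Proof. by apply/setP => i; rewrite !inE (addnC (_ \in A1)). Qed.

Lemma G3C13 d (A1 A2 A3 : {set 'I_d}) : G3 A1 A2 A3 = G3 A3 A2 A1.
Proof. by apply/setP => i; rewrite !inE; lia. Qed.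

Lemma G3_sub d (A1 A2 A3 B : {set 'I_d}) : A1 \subset B -> A2 :&: A3 \subset B ->
  G3 A1 A2 A3 \subset B.
Proof.
move=> /subsetP h1 /subsetP h2; apply/subsetP => i; rewrite inE.
case: (boolP (i \in A1)) => [/h1 //|_].
case: (boolP (i \in A2)); case: (boolP (i \in A3)) => //= a3 a2 _.
by apply: h2; rewrite inE a2 a3.
Qed.

Lemma G3_0 d (A1 A2 : {set 'I_d}) : G3 A1 A2 set0 \subset A1 :&: A2.
Proof.
apply/subsetP => i; rewrite !inE.
by case: (i \in A1); case: (i \in A2).
Qed.

Lemma arith3 (d L G2 G3 x1 x2 x3 : nat) : 3 * L + 1 <= d ->
  G2 < d -> G3 < d -> x1 < d -> x2 < d -> x3 < d ->
  (if x1 + G2 < d then x1 + G2 else x1 + G2 - d) <= L ->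
  (if x1 + G3 < d then x1 + G3 else x1 + G3 - d) <= L ->
  L < x1 ->
  x2 <= L ->
  (if x2 + G3 < d then x2 + G3 else x2 + G3 - d) <= L ->
  L < (if x2 + G2 < d then x2 + G2 else x2 + G2 - d) ->
  x3 <= L ->
  (if x3 + G2 < d then x3 + G2 else x3 + G2 - d) <= L ->
  L < (if x3 + G3 < d then x3 + G3 else x3 + G3 - d) -> False.
Proof.
move=> *.
repeat match goal with H : context [if ?c then _ else _] |- _ => move: H; case: ifP => ? H end.
all: lia.
Qed.

Lemma fact3 d L a1 a2 a3 (A1 A2 A3 : {set 'I_d}) (Hd : 0 < d) : 3 * L + 1 <= d ->
  a1 < d -> a2 < d -> a3 < d ->
  A1 \subset Wset d L a1 -> A2 \subset Wset d L a2 -> A3 \subset Wset d L a3 ->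
  #|G3 A1 A2 A3| <= L.+1.
Proof.
move=> hL h1 h2 h3 s1 s2 s3.
have key : [|| Wset d L a2 :&: Wset d L a3 \subset Wset d L a1,
               Wset d L a1 :&: Wset d L a3 \subset Wset d L a2 |
               Wset d L a2 :&: Wset d L a1 \subset Wset d L a3].
  case: (boolP (_ \subset Wset d L a1)) => // /subsetPn [i1 hi1 ni1].
  case: (boolP (_ \subset Wset d L a2)) => // /subsetPn [i2 hi2 ni2].
  case: (boolP (_ \subset Wset d L a3)) => // /subsetPn [i3 hi3 ni3].
  exfalso.
  move: hi1 hi2 hi3 ni1 ni2 ni3; rewrite !inE -!ltnNge.
  have e := fun i q (hi : i < d) (hq : q < d) => @Dadd d i a1 q hi h1 hq.
  rewrite (e i1 a2 (ltn_ord _) h2) (e i1 a3 (ltn_ord _) h3) (e i2 a2 (ltn_ord _) h2)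
    (e i2 a3 (ltn_ord _) h3) (e i3 a2 (ltn_ord _) h2) (e i3 a3 (ltn_ord _) h3).
  have D1 := @Dlt d _ a1 Hd; have D2 := @Dlt d a1 a2 Hd; have D3 := @Dlt d a1 a3 Hd.
  rewrite !modn_if; try (by have := D1 i1; have := D1 i2; have := D1 i3; lia).
  move=> /andP[p1 p2] /andP[p3 p4] /andP[p5 p6] p7 p8 p9.
  apply: (@arith3 d L (Dd d a1 a2) (Dd d a1 a3) (Dd d i1 a1) (Dd d i2 a1) (Dd d i3 a1)) => //; try exact: Dlt.
case/or3P: key => k.
- apply: (leq_trans (subset_leq_card (G3_sub s1 (subset_trans (setISS s2 s3) k)))).
  exact: card_W.
- rewrite G3C12.
  apply: (leq_trans (subset_leq_card (G3_sub s2 (subset_trans (setISS s1 s3) k)))).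
  exact: card_W.
- rewrite G3C13.
  apply: (leq_trans (subset_leq_card (G3_sub s3 (subset_trans (setISS s2 s1) k)))).
  exact: card_W.
Qed.


Inductive kd := kR of nat | kH of nat | kN.

Definition kset d t (k : kd) : {set 'I_d} :=
  match k with kR a => Wset d (t - 3) a | kH a => Wset d (t - 2) a | kN => set0 end.
Definition kpos k := match k with kR a | kH a => a | kN => 0 end.
Definition isR k : nat := if k is kR _ then 1 else 0.
Definition isH k : nat := if k is kH _ then 1 else 0.
Definition rimdist k1 k2 := match k1, k2 with kR a, kR b => a != b | _, _ => true end.

Definition bndrh t r h :=
  if r + h <= 1 then 0 else if h == 0 then (if r == 2 then t - 3 else t - 2)
  else if (r == 1) && (h == 1) then t - 2 else t - 1.

Lemma kset_sub d t k : kset d t k \subset Wset d (t-2) (kpos k).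
Proof.
case: k => [a|a|] /=; last exact: sub0set.
  by apply/subsetP => i; rewrite !inE; lia.
exact: subxx.
Qed.

Lemma L_N3 d (A B : {set 'I_d}) : #|G3 A B set0| <= #|A :&: B|.
Proof. exact/subset_leq_card/G3_0. Qed.

Lemma perhub d t k1 k2 k3 (Hd : 0 < d) : 4 <= t -> 3 * t - 5 <= d ->
  kpos k1 < d -> kpos k2 < d -> kpos k3 < d ->
  rimdist k1 k2 -> rimdist k1 k3 -> rimdist k2 k3 ->
  #|G3 (kset d t k1) (kset d t k2) (kset d t k3)| <=
     bndrh t (isR k1 + isR k2 + isR k3) (isH k1 + isH k2 + isH k3).
Proof.
move=> ht hd p1 p2 p3.
have gen : #|G3 (kset d t k1) (kset d t k2) (kset d t k3)| <= t - 1.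
  have := fact3 Hd (_ : 3 * (t - 2) + 1 <= d) p1 p2 p3 (kset_sub d t k1)
     (kset_sub d t k2) (kset_sub d t k3).
  move=> H; have {}H := H ltac:(lia); lia.
have allR : forall a b c, a < d -> b < d -> c < d ->
   #|G3 (Wset d (t-3) a) (Wset d (t-3) b) (Wset d (t-3) c)| <= t - 2.
  move=> a b c ha hb hc.
  have := fact3 Hd (_ : 3 * (t - 3) + 1 <= d) ha hb hc (subxx _) (subxx _) (subxx _).
  move=> H; have {}H := H ltac:(lia); lia.
have RR : forall a b, a < d -> b < d -> a != b ->
   #|Wset d (t-3) a :&: Wset d (t-3) b| <= t - 3.
  move=> a b ha hb hab; apply: card_WI => //; lia.
have RH : forall a b, a < d -> #|Wset d (t-3) a :&: Wset d (t-2) b| <= t - 2.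
  move=> a b ha; apply: leq_trans (subset_leq_card (subsetIl _ _)) _.
  have := card_W (t-3) Hd ha; lia.
have HR : forall a b, a < d -> #|Wset d (t-2) b :&: Wset d (t-3) a| <= t - 2.
  by move=> a b ha; rewrite setIC; apply: RH.
move: gen; case: k1 p1 => [a1|a1|] /= p1; case: k2 p2 => [a2|a2|] /= p2;
  case: k3 p3 => [a3|a3|] /= p3 gen r12 r13 r23; rewrite /bndrh /=;
  try (by apply: gen); try (by apply: allR);
  rewrite ?[G3 _ set0 _]G3C12 ?[G3 set0 _ _]G3C13;
  apply: leq_trans (L_N3 _ _) _;
  first [ by rewrite setI0 cards0 | by rewrite set0I cards0 | by apply: RH
        | by apply: HR | by apply: RR | by apply: RR; rewrite // eq_sym ].
Qed.


Lemma bnd_le t r h : bndrh t r h <= t - 1.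
Proof. rewrite /bndrh; splitall; lia. Qed.

Lemma pair_bnd t r h1 h2 : 3 <= t -> r + h1 + h2 <= 3 ->
  bndrh t r h1 + bndrh t r h2 <= 2 * (t - 2).
Proof. move=> ht hs; rewrite /bndrh; splitall; lia. Qed.

Lemma sum_bnd s B (f : 'I_s -> nat) : 2 <= s ->
  (forall u v, u != v -> f u + f v <= 2 * B) -> \sum_u f u <= s * B.
Proof.
move=> hs hp.
case: (boolP [exists u, B < f u]); last first.
  rewrite negb_exists => /forallP hB.
  apply: (@leq_trans (\sum_(u : 'I_s) B)); last by rewrite sum_nat_const card_ord.
  by apply: leq_sum => u _; rewrite leqNgt hB.
case/existsP => u0 hu0.
have h0 : 0 < s by lia.
have h1 : 1 < s by lia.
pose u1 : 'I_s := if val u0 == 0 then Ordinal h1 else Ordinal h0.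
have n01 : u1 != u0.
  by rewrite /u1; case: ifP => h; apply/eqP => e; move: h; rewrite -e /= ?eqxx.
have hB : forall u, u != u0 -> f u <= B.
  by move=> u hu; have := hp u u0 hu; lia.
rewrite (bigD1 u0) //= (bigD1 u1) //=.
have H : f u0 + f u1 <= 2 * B by apply: hp; rewrite eq_sym.
apply: (@leq_trans (f u0 + (f u1 + \sum_(i | (i != u0) && (i != u1)) B))).
  rewrite leq_add2l leq_add2l; apply: leq_sum => i /andP[hi _]; exact: hB.
rewrite sum_nat_const.
have -> : #|[pred i | (i != u0) && (i != u1)]| = #|~: [set u0; u1]|.
  by apply: eq_card => i; rewrite !inE negb_or andbC.
have := cardsC [set u0; u1]; rewrite cards2 eq_sym n01 card_ord.
move=> e; nia.
Qed.


Definition ordm n (Hn : 0 < n) x : 'I_n := Ordinal (ltn_pmod x Hn).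

Definition emb s d t (Hd : 0 < d) (u : 'I_s) (i : nat) (b : bool) (k : 'I_t)
  : wheel_vertex s d :=
  if nat_of_ord k == 0 then inl u
  else inr (ordm Hd (i + (if b then (nat_of_ord k).-1 else t.-1 - nat_of_ord k))).

Definition Uset s d t (Hd : 0 < d) (u : 'I_s) (i : nat) : {set wheel_vertex s d} :=
  [set emb Hd u i true k | k : 'I_t].

Lemma Umem s d t (Hd : 0 < d) (u : 'I_s) (i : nat) (x : wheel_vertex s d) :
  2 <= t -> t <= d -> i < d ->
  (x \in Uset t Hd u i) =
  (match x with inl v => v == u | inr y => Dd d i y <= t - 2 end).
Proof.
move=> ht htd hi; case: x => [v|y].
  apply/imsetP/eqP.
    case=> k _; rewrite /emb; case: ifP => // _ [] //.
  move=> ->; have h0 : 0 < t by lia.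
  by exists (Ordinal h0).
apply/imsetP/idP.
  case=> k _; rewrite /emb; case: ifP => // hk [] ->.
  have hk' := ltn_ord k.
  have hy : (i + (k.-1)) %% d < d by rewrite ltn_pmod.
  rewrite /= (Dif hi hy) modn_if; last lia.
  move/eqP: hk => hk; splitall; lia.
move=> h.
have hk : (Dd d i y).+1 < t by lia.
exists (Ordinal hk) => //; rewrite /emb /=; congr inr; apply: val_inj => /=.
have hy := ltn_ord y.
move: h; rewrite (Dif hi hy) modn_if => [h|]; splitall; lia.
Qed.

Inductive ety s d := eR of 'I_d | eS of 'I_s & 'I_d.
Arguments eR {s d}.

Definition kat s d (u : 'I_s) (e : ety s d) : kd :=
  match e with eR a => kR a | eS v a => if v == u then kH a else kN end.

Definition eset s d (Hd : 0 < d) (e : ety s d) : {set wheel_vertex s d} :=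
  match e with
  | eR a => [set inr a; inr (ordm Hd a.+1)]
  | eS v a => [set inl v; inr a]
  end.

Lemma edge_class s d (Hd : 0 < d) (e : {set wheel_vertex s d}) :
  is_edge (@wheel_adj s d) e -> exists ty : ety s d, e = eset Hd ty.
Proof.
case/existsP => x /existsP [y /andP [/andP [nxy adj] /eqP ->]].
case: x y nxy adj => [v|a] [w|b] //= nxy adj.
- by exists (eS v b).
- by exists (eS w a); rewrite setUC.
- case/orP: adj => /eqP h.
    by exists (eR a); congr [set _; inr _]; apply: val_inj.
  by exists (eR b); rewrite setUC; congr [set _; inr _]; apply: val_inj.
Qed.

Lemma sub_kat s d t (Hd : 0 < d) (u : 'I_s) (ty : ety s d) (i : 'I_d) :
  3 <= t -> t < d ->
  (eset Hd ty \subset Uset t Hd u i) = (i \in kset d t (kat u ty)).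
Proof.
move=> ht htd; have hi := ltn_ord i.
case: ty => [a|v a] /=; rewrite subUset !sub1set !Umem //; try lia.
  rewrite inE /=.
  have ha := ltn_ord a.
  have ha1 : a.+1 %% d < d by rewrite ltn_pmod.
  rewrite (Dif hi ha) (Dif hi ha1) modn_if; last lia.
  apply/idP/idP; [move/andP=> [h1 h2] | move=> h1; apply/andP; split]; splitall; lia.
by case: eqP => _; rewrite ?inE.
Qed.

Lemma kat_pos s d (u : 'I_s) (ty : ety s d) : 0 < d -> kpos (kat u ty) < d.
Proof. by move=> hd; case: ty => [a|v a] /=; [|case: eqP => _ /=]. Qed.

Lemma kat_dist s d (Hd : 0 < d) (u : 'I_s) (t1 t2 : ety s d) :
  eset Hd t1 != eset Hd t2 -> rimdist (kat u t1) (kat u t2).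
Proof.
case: t1 => [a|v a]; case: t2 => [b|w b] /=; try by move=> _; do 2? case: eqP.
by apply: contra => /eqP /val_inj ->.
Qed.

Lemma kat_cnt s d (u u' : 'I_s) (ty : ety s d) : u != u' ->
  isR (kat u ty) + isH (kat u ty) + isH (kat u' ty) <= 1.
Proof.
move=> nu; case: ty => [a|v a] //=.
case: (eqVneq v u) => [e|ne]; case: (eqVneq v u') => [e'|ne'] //=.
by move: nu; rewrite -e -e' eqxx.
Qed.

Lemma kat_R s d (u u' : 'I_s) (ty : ety s d) : isR (kat u ty) = isR (kat u' ty).
Proof. by case: ty => [a|v a] //=; do 2 case: eqP. Qed.


Lemma count_bound s d t (Hd : 0 < d) (e1 e2 e3 : {set wheel_vertex s d}) :
  4 <= t -> 3 * t - 5 <= d ->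
  is_edge (@wheel_adj s d) e1 -> is_edge (@wheel_adj s d) e2 ->
  is_edge (@wheel_adj s d) e3 ->
  e1 != e2 -> e1 != e3 -> e2 != e3 ->
  \sum_(u : 'I_s) #|[set i : 'I_d | 2 <= (e1 \subset Uset t Hd u i)
        + (e2 \subset Uset t Hd u i) + (e3 \subset Uset t Hd u i)]|
  <= maxn (s * (t - 2)) (t - 1).
Proof.
move=> ht hd /(edge_class Hd) [ty1 ->] /(edge_class Hd) [ty2 ->]
  /(edge_class Hd) [ty3 ->] n12 n13 n23.
pose f u := #|G3 (kset d t (kat u ty1)) (kset d t (kat u ty2)) (kset d t (kat u ty3))|.
rewrite (eq_bigr f); last first.
  move=> u _; apply: eq_card => i; rewrite !inE !sub_kat //; lia.
have hf : forall u, f u <= bndrh t (isR (kat u ty1) + isR (kat u ty2) + isR (kat u ty3))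
      (isH (kat u ty1) + isH (kat u ty2) + isH (kat u ty3)).
  move=> u; apply: perhub => //; try exact: kat_pos; exact: kat_dist.
case: (leqP s 1) => hs.
  apply: (@leq_trans (\sum_(u : 'I_s) (t - 1))).
    by apply: leq_sum => u _; apply: leq_trans (hf u) (bnd_le _ _ _).
  rewrite sum_nat_const card_ord; nia.
apply: (@leq_trans (s * (t - 2))); last by apply: leq_maxl.
apply: (@sum_bnd s (t - 2) f hs) => u v nuv.
apply: leq_trans (leq_add (hf u) (hf v)) _.
rewrite (kat_R v u ty1) (kat_R v u ty2) (kat_R v u ty3).
apply: pair_bnd; first lia.
have := kat_cnt ty1 nuv; have := kat_cnt ty2 nuv; have := kat_cnt ty3 nuv; lia.
Qed.


Definition Tset (T : finType) t (tadj : rel 'I_t) (f : 'I_t -> T) : {set {set T}} :=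
  [set e | [exists a, exists b, [&& a != b, tadj a b & e == [set f a; f b]]]].

Lemma set2_eq (T : finType) (a b x y : T) : [set a; b] = [set x; y] -> x != y ->
  (a = x /\ b = y) \/ (a = y /\ b = x).
Proof.
move=> E nxy.
have ha : a \in [set x; y] by rewrite -E set21.
have hb : b \in [set x; y] by rewrite -E set22.
have hx : x \in [set a; b] by rewrite E set21.
have hy : y \in [set a; b] by rewrite E set22.
move: ha hb hx hy; rewrite !inE.
case/orP=> /eqP ha; case/orP=> /eqP hb; subst; rewrite ?eqxx ?orbb //=.
- by move=> _ /eqP e; move: nxy; rewrite e eqxx.
- by left.
- by right.
- by move=> /eqP e; move: nxy; rewrite e eqxx.
Qed.

Lemma iso_facts (T : finType) (adj : rel T) t (tadj : rel 'I_t) U F :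
  symmetric adj ->
  is_subgraph adj U F -> iso_to tadj U F ->
  exists f : 'I_t -> T, [/\ injective f, U = f @: setT, F = Tset tadj f &
     forall a b, a != b -> tadj a b -> adj (f a) (f b)].
Proof.
move=> adjs /forallP Hsub /existsP [g /and4P [/injectiveP ginj /eqP HU /forallP Hadj /forallP Hcov]].
have edge_of : forall e, e \in F -> exists x y, [/\ x != y, adj x y & e = [set x; y]].
  move=> e eF; have := Hsub e; rewrite eF /= => /andP [He _].
  case/existsP: He => x /existsP [y /andP [/andP [nxy axy] /eqP ->]].
  by exists x, y.
have HF : forall a b, a != b -> ([set g a; g b] \in F) = tadj a b.
  by move=> a b nab; have := Hadj a; move/forallP/(_ b); rewrite nab /= => /eqP.
exists g; split => //.
  apply/setP => e; rewrite inE; apply/idP/existsP.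
    move=> eF; have := Hcov e; rewrite eF /= => /existsP [a /existsP [b /eqP ea]].
    have nab : a != b.
      apply/eqP => ab; subst b.
      have [x [y [nxy _ exy]]] := edge_of e eF.
      have : x \in e by rewrite exy set21.
      have : y \in e by rewrite exy set22.
      rewrite ea !inE !orbb => /eqP ey /eqP ex.
      by move: nxy; rewrite ex ey eqxx.
    by exists a; apply/existsP; exists b; rewrite nab -HF // -ea eF ea eqxx.
  by case=> a /existsP [b /and3P [nab tab /eqP ->]]; rewrite HF.
move=> a b nab tab.
have : [set g a; g b] \in F by rewrite HF.
move/edge_of => [x [y [nxy axy exy]]].
by case: (set2_eq exy nxy) => [[-> ->]|[-> ->]] //; rewrite adjs.
Qed.

Lemma eq_Tset (T : finType) t (tadj : rel 'I_t) (f g : 'I_t -> T) :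
  f =1 g -> Tset tadj f = Tset tadj g.
Proof. by move=> fg; apply/setP => e; rewrite !inE; under eq_existsb => a do under eq_existsb => b do rewrite !fg. Qed.

Lemma Tset_aut (T : finType) t (tadj : rel 'I_t) (f : 'I_t -> T) (phi : 'I_t -> 'I_t) :
  involutive phi -> (forall a b, tadj (phi a) (phi b) = tadj a b) ->
  Tset tadj (fun a => f (phi a)) = Tset tadj f.
Proof.
move=> inv aut; apply/setP => e; rewrite !inE; apply/existsP/existsP.
  case=> a /existsP [b /and3P [nab tab ee]]; exists (phi a); apply/existsP; exists (phi b).
  by rewrite aut tab ee (inj_eq (inv_inj inv)) nab.
case=> a /existsP [b /and3P [nab tab ee]]; exists (phi a); apply/existsP; exists (phi b).
by rewrite aut tab !inv ee (inj_eq (inv_inj inv)) nab.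
Qed.

Lemma imset_surj (T : finType) t (f : 'I_t -> T) (phi : 'I_t -> 'I_t) :
  involutive phi -> [set f (phi a) | a : 'I_t] = [set f a | a : 'I_t].
Proof.
move=> inv; apply/setP => x; apply/imsetP/imsetP => [] [a _ ->].
  by exists (phi a).
by exists (phi a) => //; rewrite inv.
Qed.


Lemma ord_eq n (x y : 'I_n) : nat_of_ord x = nat_of_ord y -> x = y.
Proof. exact: val_inj. Qed.

Definition refl t (Ht : 0 < t) (q : nat) (a : 'I_t) : 'I_t := ordm Ht (q + t - a).

Lemma refl_val t Ht q (a : 'I_t) : q < t ->
  nat_of_ord (@refl t Ht q a) = if a <= q then q - a else q + t - a.
Proof.
move=> hq; have ha := ltn_ord a; rewrite /= modn_if; last lia.
splitall; lia.
Qed.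

Lemma refl_inv t Ht q : q < t -> involutive (@refl t Ht q).
Proof.
move=> hq a; apply: ord_eq; have ha := ltn_ord a.
rewrite refl_val // refl_val //; splitall; lia.
Qed.

Lemma succ_if t x : x < t -> x.+1 %% t = if x.+1 < t then x.+1 else 0.
Proof. move=> h; rewrite modn_if; last lia. splitall; lia. Qed.

Lemma refl_cyc t Ht q (a b : 'I_t) : q < t ->
  ((nat_of_ord (@refl t Ht q a)).+1 %% t == nat_of_ord (@refl t Ht q b)) = ((nat_of_ord b).+1 %% t == nat_of_ord a).
Proof.
move=> hq; have ha := ltn_ord a; have hb := ltn_ord b.
have hra := ltn_ord (refl Ht q a).
rewrite !succ_if // !refl_val //.
apply/idP/idP => /eqP H; apply/eqP; move: H; splitall; lia.
Qed.

Definition Ch t (chords : seq nat) (a b : 'I_t) :=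
  ((nat_of_ord a == 0) && ((nat_of_ord b).+1 \in chords)) || ((nat_of_ord b == 0) && ((nat_of_ord a).+1 \in chords)).

Lemma tadjE t chords (a b : 'I_t) : @theta_adj t chords a b =
  [|| ((nat_of_ord a).+1 %% t == b), ((nat_of_ord b).+1 %% t == a) | Ch chords a b].
Proof. by []. Qed.

Lemma tadj_refl t Ht q chords : q < t ->
  (forall a b, Ch chords (@refl t Ht q a) (@refl t Ht q b) = Ch chords a b) ->
  forall a b, @theta_adj t chords (refl Ht q a) (refl Ht q b) = @theta_adj t chords a b.
Proof.
move=> hq H a b; rewrite !tadjE H !refl_cyc //.
by case: (_ == _); case: (_ == _).
Qed.

Lemma Ch_refl_h t Ht h chords : 0 < h < t ->
  (forall c, c \in chords -> c = h.+1) ->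
  forall a b, Ch chords (@refl t Ht h a) (@refl t Ht h b) = Ch chords a b.
Proof.
move=> hh hc.
have mem : forall x, (x \in chords) = (x == h.+1) && (h.+1 \in chords).
  move=> x; apply/idP/andP => [hx|[/eqP -> //]].
  by rewrite -(hc x hx) eqxx hx.
move: (h.+1 \in chords) mem => P mem.
have e0 : forall a : 'I_t, (nat_of_ord (refl Ht h a) == 0) = (nat_of_ord a == h).
  move=> a; have := ltn_ord a; rewrite refl_val; last lia.
  move=> ha; apply/idP/idP => /eqP H; apply/eqP; move: H; splitall; lia.
have eh : forall a : 'I_t, ((nat_of_ord (refl Ht h a)).+1 == h.+1) = (nat_of_ord a == 0).
  move=> a; have := ltn_ord a; rewrite refl_val; last lia.
  move=> ha; apply/idP/idP => /eqP H; apply/eqP; move: H; splitall; lia.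
move=> a b; rewrite /Ch !mem !e0 !eh !eqSS; clear mem.
by case: (_ == 0); case: (_ == 0); case: (_ == h); case: (_ == h);
   case: P.
Qed.

Lemma Ch_refl_0 t Ht chords :
  (forall c, c \in chords -> 2 < c < t) ->
  (forall c, c \in chords -> t.+2 - c \in chords) ->
  forall a b, Ch chords (@refl t Ht 0 a) (@refl t Ht 0 b) = Ch chords a b.
Proof.
move=> hb hc.
have e0 : forall a : 'I_t, (nat_of_ord (refl Ht 0 a) == 0) = (nat_of_ord a == 0).
  move=> a; have := ltn_ord a; rewrite refl_val //.
  move=> ha; apply/idP/idP => /eqP H; apply/eqP; move: H; splitall; lia.
have em : forall a : 'I_t, ((nat_of_ord (refl Ht 0 a)).+1 \in chords) = ((nat_of_ord a).+1 \in chords).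
  move=> a; have := ltn_ord a; rewrite refl_val //.
  case: ifP => ha0 ha; first by have -> : nat_of_ord a = 0 by lia.
  apply/idP/idP => h.
    by have := hc _ h; rewrite (_ : t.+2 - (0 + t - a).+1 = (nat_of_ord a).+1) //; lia.
  by have := hc _ h; rewrite (_ : t.+2 - (nat_of_ord a).+1 = (0 + t - a).+1) //; lia.
by move=> a b; rewrite /Ch !e0 !em.
Qed.

Lemma emb_flip s d t (Hd : 0 < d) (Ht : 0 < t) (u : 'I_s) i b (a : 'I_t) :
  emb Hd u i (~~ b) a = emb Hd u i b (refl Ht 0 a).
Proof.
have ha := ltn_ord a.
rewrite /emb refl_val //.
case: ifP => h0.
  by rewrite (_ : (if a <= 0 then 0 - a else 0 + t - a) = 0) ?eqxx //; splitall; lia.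
have -> : (if a <= 0 then 0 - a else 0 + t - a) = t - a by splitall; lia.
have -> : (t - a == 0) = false by apply/eqP; move/eqP: h0; lia.
congr inr; apply: val_inj => /=; congr (_ %% _); congr (_ + _).
by case: b => /=; rewrite -!subn1; lia.
Qed.


Lemma sym_clo t l chords : theta_chords t l chords -> theta_symmetric t l chords ->
  forall c, c \in chords -> t.+2 - c \in chords.
Proof.
case=> hsz [_ hall] /orP [/eqP l0 | /forallP H] c hc.
  by move: hc; rewrite (size0nil (_ : size chords = 0)) // hsz.
have hj0 : index c chords < l by rewrite -hsz index_mem.
set j0 := index c chords in hj0.
have ec : c = nth 0 chords j0 by rewrite nth_index.
set hh := (l.+1)./2.
have hd : l <= hh + hh.
  have := odd_double_half l.+1; rewrite -addnn /hh; case: (odd _) => /=; lia.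
have key : nth 0 chords j0 + nth 0 chords (l.-1 - j0) = t + 2.
  case: (ltnP j0 hh) => hj.
    have := H (Ordinal hj); rewrite /= => /eqP.
    by have -> : (l.+1 - j0.+1).-1 = l.-1 - j0 by rewrite -!subn1; lia.
  have hj1 : l.-1 - j0 < hh by rewrite -subn1; lia.
  have := H (Ordinal hj1); rewrite /= => /eqP.
  have -> : (l.+1 - (l.-1 - j0).+1).-1 = j0 by rewrite -!subn1; lia.
  by rewrite addnC.
have -> : t.+2 - c = nth 0 chords (l.-1 - j0) by rewrite ec; lia.
by apply: mem_nth; rewrite hsz -subn1; lia.
Qed.

Lemma wadj_sym s d : symmetric (@wheel_adj s d).
Proof. by move=> [x|x] [y|y] //=; rewrite orbC. Qed.

Lemma succ_inj d x y : x < d -> y < d -> x.+1 %% d = y.+1 %% d -> x = y.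
Proof. move=> hx hy; rewrite !succ_if //; splitall; lia. Qed.

Lemma mod_succ d x : ((x %% d).+1) %% d = x.+1 %% d.
Proof. by rewrite -addn1 modnDml addn1. Qed.

Lemma shift_adj d i x y : x.+1 < d -> y < d ->
  ((i + x) %% d).+1 %% d = (i + y) %% d -> x.+1 = y.
Proof.
move=> hx hy; rewrite mod_succ -addnS => /eqP.
by rewrite eqn_modDl !modn_small // => /eqP.
Qed.

Lemma imset_surj2 (T : finType) t (f : 'I_t -> T) (phi : 'I_t -> 'I_t) :
  (forall k, exists a, phi a = k) -> [set f (phi a) | a : 'I_t] = [set f a | a : 'I_t].
Proof.
move=> sur; apply/setP => x; apply/imsetP/imsetP => [] [a _ ->].
  by exists (phi a).
by have [a' <-] := sur a; exists a'.
Qed.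

Lemma structure s d t l chords (Hd : 0 < d) (U : {set wheel_vertex s d}) F :
  4 <= t -> t.+1 < d -> theta_chords t l chords ->
  is_subgraph (@wheel_adj s d) U F -> iso_to (@theta_adj t chords) U F ->
  #|[set x in U | is_hub x]| == 1 ->
  exists u (i : 'I_d) b, U = Uset t Hd u i /\ F = Tset (@theta_adj t chords) (emb Hd u i b).
Proof.
move=> ht htd hch Hsub Hiso Hhub.
have [f [finj HU HF Hadj]] := iso_facts (@wadj_sym s d) Hsub Hiso.
have Ht : 0 < t by lia.
case: hch => hsz [_ /allP hall].
have hcr : forall c, c \in chords -> 2 < c < t by move=> c /hall.
case/cards1P: Hhub => x0 Hx0.
have : x0 \in [set x in U | is_hub x] by rewrite Hx0 set11.
rewrite inE HU => /andP [/imsetP [h _ ex0] hubh].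
have onehub : forall a, is_hub (f a) -> a = h.
  move=> a ha; have : f a \in [set x in U | is_hub x] by rewrite inE HU ha andbT imset_f.
  by rewrite Hx0 inE ex0 => /eqP /finj.
case Efh : (f h) => [u|y]; last by move: hubh; rewrite ex0 Efh.
pose rho k := ordm Ht (h + k).
pose g k := match f (rho k) with inr y => nat_of_ord y | inl _ => 0 end.
have hh := ltn_ord h.
have rhov : forall k, k < t -> nat_of_ord (rho k) = if h + k < t then h + k else h + k - t.
  by move=> k hk; rewrite /= modn_if //; lia.
have glt : forall k, g k < d by move=> k; rewrite /g; case: (f _).
have Frim : forall k, 0 < k < t -> f (rho k) = inr (ordm Hd (g k)).
  move=> k /andP [k0 kt].
  rewrite /g; case E: (f (rho k)) => [v|y].
    have := onehub (rho k); rewrite E => /(_ isT) /(congr1 (@nat_of_ord t)).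
    rewrite rhov //; splitall; lia.
  by congr inr; apply: val_inj; rewrite /= modn_small.
have Fadj : forall k, 0 < k -> k.+1 < t ->
    ((g k).+1 %% d == g k.+1) || ((g k.+1).+1 %% d == g k).
  move=> k k0 kt.
  have nk : rho k != rho k.+1.
    apply/eqP => /(congr1 (@nat_of_ord t)); rewrite !rhov; try lia. splitall; lia.
  have tk : @theta_adj t chords (rho k) (rho k.+1).
    rewrite tadjE; apply/orP; left.
    rewrite !rhov; try lia. rewrite succ_if; last (splitall; lia). apply/eqP; splitall; lia.
  have := Hadj _ _ nk tk; rewrite Frim ?Frim; try (apply/andP; split; lia).
  by rewrite /wheel_adj /= !(modn_small (glt _)).
have Finj : forall k k', 0 < k < t -> 0 < k' < t -> g k = g k' -> k = k'.
  move=> k k' hk hk' e.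
  have : f (rho k) = f (rho k') by rewrite !Frim // e.
  move/finj/(congr1 (@nat_of_ord t)); rewrite !rhov; try lia.
  splitall; lia.
have [b [i0 [hi0 closed]]] : exists b i0, i0 < d /\
    forall k, 0 < k < t -> g k = (i0 + (if b then k.-1 else t.-1 - k)) %% d.
  case Eb: ((g 1).+1 %% d == g 2).
    have allP : forall k, 0 < k -> k.+1 < t -> (g k).+1 %% d == g k.+1.
      elim=> [//|k IH] _ kt.
      case: (posnP k) => [->|kp]; first by [].
      have {IH} /eqP IH := IH kp (ltnW kt).
      case/orP: (Fadj k.+1 isT kt) => // /eqP e.
      have : g k.+2 = g k by apply: (succ_inj (glt _) (glt _)); rewrite e IH.
      move/Finj => H; exfalso; have := H ltac:(lia) ltac:(lia); lia.
    have H : forall k, 0 < k -> k < t -> g k = (g 1 + k.-1) %% d.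
      elim=> [//|k IH] _ kt.
      case: (posnP k) => [->|kp]; first by rewrite /= addn0 modn_small.
      rewrite -(eqP (allP k kp kt)) (IH kp (ltnW kt)) mod_succ.
      by rewrite -addnS prednK.
    exists true, (g 1); split => // k /andP [k0 kt]; exact: H.
  have allM : forall k, 0 < k -> k.+1 < t -> (g k.+1).+1 %% d == g k.
    elim=> [//|k IH] _ kt.
    case: (posnP k) => [->|kp].
      by case/orP: (Fadj 1 isT ltac:(lia)) => //; rewrite Eb.
    have {IH} /eqP IH := IH kp (ltnW kt).
    case/orP: (Fadj k.+1 isT kt) => // /eqP e.
    have : g k.+2 = g k by rewrite -e IH.
    move/Finj => H; exfalso; have := H ltac:(lia) ltac:(lia); lia.
  have H : forall m, m < t.-1 -> g (t.-1 - m) = (g t.-1 + m) %% d.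
    elim=> [|m IH] hm; first by rewrite subn0 addn0 modn_small.
    have e1 : (t.-1 - m.+1).+1 = t.-1 - m by lia.
    have := allM (t.-1 - m.+1) ltac:(lia) ltac:(lia).
    by rewrite e1 (IH (ltnW hm)) mod_succ addnS => /eqP <-.
  exists false, (g t.-1); split => // k /andP [k0 kt].
  have := H (t.-1 - k) ltac:(lia).
  by have -> : t.-1 - (t.-1 - k) = k by lia.
pose rot (a : 'I_t) := ordm Ht (a + t - h).
have rotv : forall a : 'I_t, nat_of_ord (rot a) = if h <= a then a - h else a + t - h.
  by move=> a; have ha := ltn_ord a; rewrite /= modn_if; [splitall; lia | lia].
have rho_rot : forall a : 'I_t, a != h -> rho (rot a) = a.
  move=> a nah; apply: ord_eq; have ha := ltn_ord a; have hr := ltn_ord (rot a).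
  have nah' : nat_of_ord a <> nat_of_ord h by move=> e; move: nah; rewrite (ord_eq e) eqxx.
  rewrite rhov // rotv; splitall; lia.
have rot_rho : forall k : 'I_t, rot (rho k) = k.
  move=> k; apply: ord_eq; have hk := ltn_ord k.
  rewrite rotv rhov //; splitall; lia.
have Frot : forall a, f a = emb Hd u i0 b (rot a).
  move=> a; case: (eqVneq a h) => [->|nah].
    by rewrite Efh /emb rotv leqnn subnn eqxx.
  have ha := ltn_ord a.
  have nah' : nat_of_ord a <> nat_of_ord h by move=> e; move: nah; rewrite (ord_eq e) eqxx.
  have hk : 0 < rot a < t.
    rewrite rotv; apply/andP; split; splitall; lia.
  rewrite -{1}(rho_rot a nah) Frim // /emb ifF; last by move/andP: hk => [? _]; lia.
  congr inr; apply: ord_eq; by rewrite /= (closed _ hk) modn_mod.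
have Uemb : forall bb, [set emb Hd u i0 bb a | a : 'I_t] = Uset t Hd u i0.
  case=> //; rewrite /Uset -(imset_surj _ (refl_inv Ht (_ : 0 < t))) //.
  by apply: eq_imset => a; rewrite -emb_flip.
have HU' : U = Uset t Hd u i0.
  rewrite HU -(Uemb b) -(imset_surj2 (emb Hd u i0 b) (phi := rot)); last first.
    by move=> k; exists (rho k).
  by apply/setP => x; apply/imsetP/imsetP => [] [a _ ->]; exists a; rewrite ?Frot ?inE.
case: (eqVneq (nat_of_ord h) 0) => h0.
  exists u, (Ordinal hi0), b; split; first by rewrite -HU.
  rewrite HF; apply: eq_Tset => a; rewrite Frot; congr emb.
  by apply: ord_eq; rewrite rotv h0 subn0.
have hc1 : forall c, c \in chords -> c = h.+1.
  move=> c Hc; have /andP [c2 ct] := hcr c Hc.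
  pose z := ordm Ht 0; pose b0 := ordm Ht c.-1.
  have zv : nat_of_ord z = 0 by rewrite /= mod0n.
  have bv : nat_of_ord b0 = c.-1 by rewrite /= modn_small //; lia.
  have nzb : z != b0 by apply/eqP => /(congr1 (@nat_of_ord t)); rewrite zv bv; lia.
  have tz : @theta_adj t chords z b0.
    rewrite tadjE /Ch zv bv eqxx /= prednK; [by rewrite Hc !orbT | lia].
  have wa := Hadj _ _ nzb tz.
  apply/eqP; apply: contraT => nch.
  have rz : nat_of_ord (rot z) = t - h by rewrite rotv zv; splitall; lia.
  have rb : nat_of_ord (rot b0) = if h <= c.-1 then c.-1 - h else c.-1 + t - h.
    by rewrite rotv bv.
  move: wa; rewrite !Frot /emb rz rb.
  rewrite (_ : (t - h == 0) = false); last by apply/eqP; lia.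
  rewrite (_ : ((if h <= c.-1 then c.-1 - h else c.-1 + t - h) == 0) = false); last first.
    by apply/eqP; move/eqP: nch; splitall; lia.
  rewrite /wheel_adj /= => /orP [] /eqP e.
    have := shift_adj _ _ e; move: nch; case: b {closed Frot Uemb HU'} e; splitall; lia.
  have := shift_adj _ _ e; move: nch; case: b {closed Frot Uemb HU'} e; splitall; lia.
have hh0 : 0 < h < t by apply/andP; split; lia.
exists u, (Ordinal hi0), (~~ b); split; first by rewrite -HU.
rewrite HF -(Tset_aut f (@refl_inv t Ht h hh) (@tadj_refl t Ht h chords hh
  (@Ch_refl_h t Ht h chords hh0 hc1))).
apply: eq_Tset => a; rewrite Frot emb_flip; congr emb.
have ha := ltn_ord a.
by apply: ord_eq; rewrite rotv !refl_val //; splitall; lia.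
Qed.


Lemma card_bigcup_le (I T : finType) (P : pred I) (Fs : I -> {set T}) :
  #|\bigcup_(i | P i) Fs i| <= \sum_(i | P i) #|Fs i|.
Proof.
apply: (big_rec2 (fun (A : {set T}) n => #|A| <= n)) => [|i A n _ H]; first by rewrite cards0.
by apply: leq_trans (leq_card_setU _ _) _; rewrite leq_add2l.
Qed.

Lemma sym_T s d t l chords (Hd : 0 < d) (u : 'I_s) (i : nat) :
  1 < t -> theta_chords t l chords -> theta_symmetric t l chords ->
  Tset (@theta_adj t chords) (emb Hd u i false) = Tset (@theta_adj t chords) (emb Hd u i true).
Proof.
move=> ht hch hsy.
have Ht : 0 < t by lia.
have hcl := sym_clo hch hsy.
have hcr : forall c, c \in chords -> 2 < c < t by case: hch => _ [_ /allP].
rewrite -(Tset_aut (emb Hd u i true) (@refl_inv t Ht 0 Ht)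
   (@tadj_refl t Ht 0 chords Ht (@Ch_refl_0 t Ht chords hcr hcl))).
by apply: eq_Tset => a; rewrite -emb_flip.
Qed.

Unset Implicit Arguments.

Theorem lemma2p2 (d s t l : nat) (chords : seq nat)
  (e1 e2 e3 : {set wheel_vertex s d}) :
  1 <= s -> 3 * t - 5 <= d -> 4 <= t -> l + 3 <= t ->
  theta_chords t l chords ->
  is_edge (@wheel_adj s d) e1 -> is_edge (@wheel_adj s d) e2 ->
  is_edge (@wheel_adj s d) e3 ->
  e1 != e2 -> e1 != e3 -> e2 != e3 ->
  #|[set p : {set wheel_vertex s d} * {set {set wheel_vertex s d}} |
      [&& is_subgraph (@wheel_adj s d) p.1 p.2,
          iso_to (@theta_adj t chords) p.1 p.2,
          2 <= (e1 \in p.2) + (e2 \in p.2) + (e3 \in p.2) &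
          #|[set x in p.1 | is_hub x]| == 1]]|
  <= (if theta_symmetric t l chords
      then maxn (s * (t - 2)) (t - 1)
      else maxn (2 * s * (t - 2)) (2 * (t - 1))).
Proof.
move=> hs hd ht hl hch he1 he2 he3 n12 n13 n23.
have Hd : 0 < d by lia.
pose Gm (u : 'I_s) := [set i : 'I_d | 2 <= (e1 \subset Uset t Hd u i)
        + (e2 \subset Uset t Hd u i) + (e3 \subset Uset t Hd u i)].
pose c := if theta_symmetric t l chords then 1 else 2.
pose X (u : 'I_s) (i : 'I_d) : {set {set wheel_vertex s d} * {set {set wheel_vertex s d}}} :=
   if theta_symmetric t l chords
   then [set (Uset t Hd u i, Tset (@theta_adj t chords) (emb Hd u i true))]
   else [set (Uset t Hd u i, Tset (@theta_adj t chords) (emb Hd u i bb)) | bb : bool].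
have cX : forall u i, #|X u i| <= c.
  move=> u i; rewrite /X /c; case: ifP => _; first by rewrite cards1.
  by apply: leq_trans (leq_imset_card _ _) _; rewrite card_bool.
set S := [set p : _ | _].
have sub : S \subset \bigcup_(u : 'I_s) \bigcup_(i in Gm u) X u i.
  apply/subsetP => p; rewrite inE => /and4P [hsub hiso h2 h1].
  have [u [i [b [HU HF]]]] := @structure s d t l chords Hd _ _ ht ltac:(lia) hch hsub hiso h1.
  apply/bigcupP; exists u => //; apply/bigcupP; exists i.
    rewrite inE; apply: leq_trans h2 _; rewrite -HU.
    have le : forall e, (e \in p.2) <= (e \subset p.1).
      move=> e; case E: (e \in p.2) => //=.
      by move/forallP: hsub => /(_ e); rewrite E /= => /andP [_ ->].
    by apply: leq_add; [apply: leq_add|]; apply: le.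
  rewrite /X; case: ifP => hsy.
    rewrite inE; apply/eqP; rewrite [p]surjective_pairing HU HF.
    by case: b {HF} => //; rewrite (@sym_T s d t l chords Hd u i ltac:(lia) hch hsy).
  by apply/imsetP; exists b => //; rewrite [p]surjective_pairing HU HF.
apply: leq_trans (subset_leq_card sub) _.
apply: leq_trans (card_bigcup_le _ _) _.
apply: (@leq_trans (\sum_(u : 'I_s) #|Gm u| * c)).
  apply: leq_sum => u _; apply: leq_trans (card_bigcup_le _ _) _.
  by rewrite -sum_nat_const; apply: leq_sum => i _; apply: cX.
rewrite -big_distrl /=.
have := @count_bound s d t Hd e1 e2 e3 ht hd he1 he2 he3 n12 n13 n23.
rewrite /c; case: ifP => _; first by rewrite muln1.
move=> H; apply: leq_trans (leq_mul H (leqnn 2)) _.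
rewrite -mulnA; lia.
Qed.
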